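(* Let $Z = (G, c) \subseteq \mathbb{R}^{n_x}$ be a zonotope with $G = [g_1, \dots, g_N]$, let $W \subseteq \mathbb{R}^{n_w}$ be a polytope with vertex set $V = \{w_1, \dots, w_M\}$ ($W$ is the convex hull of $V$), let $E \in \mathbb{R}^{n_x \times n_w}$, and let $H \in \mathbb{R}^{L \times n_x}$, $h \in \mathbb{R}^L$ satisfy $EW = \{x \mid Hx \leq h\}$. Let $b_1, \dots, b_N > 0$ and $d_1, \dots, d_N \geq 0$ be constants. Let $(\theta, \overline{\alpha}, \overline{c})$ be a minimizer of $$\min_{\theta, \alpha, c'} \sum_{i=1}^N b_i \alpha_i \ \text{ s.t. } \ \forall j: c' + \sum_{i=1}^N \theta_{ij} g_i = E w_j, \ |\theta_{ij}| \leq \alpha_i \leq 1 \ (i=1,\dots,N),$$ and set $\overline{\mathfrak{Z}}(Z, EW) = ([\overline{\alpha}_1 g_1, \dots, \overline{\alpha}_N g_N], \overline{c})$. Let $(\underline{\alpha}, \underline{c})$ be a maximizer of $$\max_{\alpha, c'} \sum_{i=1}^N d_i \log(\alpha_i) \ \text{ s.t. } \ H c' + |HG|\alpha \leq h, \ 0 \leq \alpha \leq 1,$$ and set $\underline{\mathfrak{Z}}(Z, EW) = ([\underline{\alpha}_1 g_1, \dots, \underline{\alpha}_N g_N], \underline{c})$. Then $$Z \ominus \overline{\mathfrak{Z}}(Z, EW) \subseteq Z \ominus EW \subseteq Z \ominus \underline{\mathfrak{Z}}(Z, EW),$$ and moreover $Z \ominus \overline{\mathfrak{Z}}(Z, EW)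 = ([(1-\overline{\alpha}_1) g_1, \dots, (1-\overline{\alpha}_N) g_N], c - \overline{c})$ and $Z \ominus \underline{\mathfrak{Z}}(Z, EW) = ([(1-\underline{\alpha}_1) g_1, \dots, (1-\underline{\alpha}_N) g_N], c - \underline{c})$.
   Context: A zonotope with generator-representation $(G, c)$, where $G = [g_1, \dots, g_N] \in \mathbb{R}^{n \times N}$ and $c \in \mathbb{R}^n$, is the set $\{c + \sum_{i=1}^N \theta_i g_i \mid \theta_i \in [-1,1]\}$; it is denoted $(G, c)$. $EW = \{Ew \mid w \in W\}$; $|HG|$ is the entrywise absolute value of $HG$; vector inequalities are entrywise. The Minkowski difference is $X \ominus Y = \{z \mid z + Y \subseteq X\}$. *)

(* Defs.v *)
From HB Require Import structures.
From mathcomp Require Import all_boot all_order all_algebra.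
From mathcomp Require Import all_classical all_reals all_analysis.
Set Implicit Arguments. Unset Strict Implicit. Unset Printing Implicit Defensive.
Import Order.TTheory GRing.Theory Num.Theory.
Local Open Scope classical_set_scope.
Local Open Scope ring_scope.

Section Defs.
Variable R : realType.

Definition zonotope (n N : nat) (G : 'M[R]_(n, N)) (c : 'cV[R]_n) : set 'cV[R]_n :=
  [set x | exists theta : 'cV[R]_N, (forall i, `|theta i 0| <= 1) /\ x = c + G *m theta].

Definition mink_diff (n : nat) (X Y : set 'cV[R]_n) : set 'cV[R]_n :=
  [set z | forall y, Y y -> X (z + y)].

Definition lin_image (m n : nat) (E : 'M[R]_(m, n)) (W : set 'cV[R]_n) : set 'cV[R]_m :=
  [set E *m w | w in W].

Definition conv_hull (n M : nat) (w : 'I_M -> 'cV[R]_n) : set 'cV[R]_n :=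
  [set x | exists lam : 'I_M -> R, (forall j, 0 <= lam j) /\ \sum_j lam j = 1 /\
                                   x = \sum_j lam j *: w j].

Definition extreme_point (n : nat) (W : set 'cV[R]_n) (x : 'cV[R]_n) : Prop :=
  W x /\ forall a b t, W a -> W b -> 0 < t < 1 -> x = t *: a + (1 - t) *: b -> a = x /\ b = x.

Definition scale_gens (n N : nat) (G : 'M[R]_(n, N)) (alpha : 'cV[R]_N) : 'M[R]_(n, N) :=
  \matrix_(k, i) (alpha i 0 * G k i).

Definition vle (n : nat) (u v : 'cV[R]_n) : Prop := forall k, u k 0 <= v k 0.

Definition mabs (m n : nat) (A : 'M[R]_(m, n)) : 'M[R]_(m, n) := map_mx Num.norm A.

Definition outer_feasible (nx nw N M : nat) (G : 'M[R]_(nx, N)) (E : 'M[R]_(nx, nw))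
    (w : 'I_M -> 'cV[R]_nw) (theta : 'M[R]_(N, M)) (alpha : 'cV[R]_N) (c' : 'cV[R]_nx) : Prop :=
  (forall j, c' + \sum_i theta i j *: col i G = E *m w j) /\
  (forall i j, `|theta i j| <= alpha i 0) /\ (forall i, alpha i 0 <= 1).

Definition outer_obj (N : nat) (b : 'I_N -> R) (alpha : 'cV[R]_N) : R :=
  \sum_i b i * alpha i 0.

Definition outer_minimizer (nx nw N M : nat) (G : 'M[R]_(nx, N)) (E : 'M[R]_(nx, nw))
    (w : 'I_M -> 'cV[R]_nw) (b : 'I_N -> R)
    (theta : 'M[R]_(N, M)) (alpha : 'cV[R]_N) (c' : 'cV[R]_nx) : Prop :=
  outer_feasible G E w theta alpha c' /\
  forall theta2 alpha2 c2, outer_feasible G E w theta2 alpha2 c2 ->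
    outer_obj b alpha <= outer_obj b alpha2.

(* Inner problem.  log is extended-real valued: log 0 = -oo (log x for x > 0). *)
Definition elog (x : R) : \bar R := if 0 < x then (ln x)%:E else -oo%E.

Definition inner_feasible (nx N L : nat) (G : 'M[R]_(nx, N)) (H : 'M[R]_(L, nx))
    (h : 'cV[R]_L) (alpha : 'cV[R]_N) (c' : 'cV[R]_nx) : Prop :=
  vle (H *m c' + mabs (H *m G) *m alpha) h /\ (forall i, 0 <= alpha i 0 <= 1).

Definition inner_obj (N : nat) (d : 'I_N -> R) (alpha : 'cV[R]_N) : \bar R :=
  (\sum_i (d i)%:E * elog (alpha i ord0))%E.

Definition inner_maximizer (nx N L : nat) (G : 'M[R]_(nx, N)) (H : 'M[R]_(L, nx))
    (h : 'cV[R]_L) (d : 'I_N -> R) (alpha : 'cV[R]_N) (c' : 'cV[R]_nx) : Prop :=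
  inner_feasible G H h alpha c' /\
  forall alpha2 c2, inner_feasible G H h alpha2 c2 ->
    (inner_obj d alpha2 <= inner_obj d alpha)%E.

End Defs.

(* Main.v *)
Require Import Defs.
From HB Require Import structures.
From mathcomp Require Import all_boot all_order all_algebra.
From mathcomp Require Import all_classical all_reals all_analysis.
From mathcomp Require Import ring lra zify.
Import Order.TTheory GRing.Theory Num.Theory.
Local Open Scope classical_set_scope.
Local Open Scope ring_scope.

Section H.
Variable R : realType.
Variables nx N : nat.
Variable G : 'M[R]_(nx, N).

Definition Zr (r : 'I_N -> R) (c : 'cV[R]_nx) : set 'cV[R]_nx :=
  [set x | exists mu : 'cV[R]_N, (forall i, `|mu i 0| <= r i) /\ x = c + G *m mu].

Lemma mulmx_sumcol (v : 'cV[R]_N) : G *m v = \sum_i v i 0 *: col i G.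
Proof.
apply/matrixP=> k l; rewrite !mxE summxE; apply: eq_bigr => i _.
by rewrite !mxE (ord1 l) mulrC.
Qed.

Lemma Zr_mono r1 r2 c : (forall i, r1 i <= r2 i) -> Zr r1 c `<=` Zr r2 c.
Proof.
move=> H x [mu [Hm ->]]; exists mu; split=> // i; exact: le_trans (Hm i) (H i).
Qed.

Lemma Zr_zon (a : 'cV[R]_N) c : Zr (fun i => a i 0) c `<=` zonotope (scale_gens G a) c.
Proof.
move=> x [mu [Hm ->]]; exists (\col_i (mu i 0 / a i 0)); split.
  move=> i; rewrite mxE.
  have [a0|an0] := eqVneq (a i 0) 0.
    by rewrite a0 invr0 mulr0 normr0.
  have Hai := Hm i.
  have apos : 0 < a i 0 by rewrite lt_def an0 /=; exact: le_trans (normr_ge0 _) Hai.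
  by rewrite normrM normfV (gtr0_norm apos) ler_pdivrMr // mul1r.
congr (_ + _); apply/matrixP=> k l; rewrite !mxE; apply: eq_bigr => i _.
rewrite !mxE (ord1 l).
have [a0|an0] := eqVneq (a i 0) 0.
  have : `|mu i 0| <= 0 by rewrite -a0.
  rewrite normr_le0 => /eqP ->; rewrite a0; ring.
by field.
Qed.

Lemma zon_Zr (a : 'cV[R]_N) c : (forall i, 0 <= a i 0) ->
  zonotope (scale_gens G a) c `<=` Zr (fun i => a i 0) c.
Proof.
move=> Ha x [th [Ht ->]]; exists (\col_i (a i 0 * th i 0)); split.
  move=> i; rewrite mxE normrM (ger0_norm (Ha i)).
  by rewrite -[X in _ <= X]mulr1 ler_wpM2l.
congr (_ + _); apply/matrixP=> k l; rewrite !mxE; apply: eq_bigr => i _.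
by rewrite !mxE (ord1 l); ring.
Qed.

Lemma lam_exists (p q rho : R) : 0 <= rho -> p <= rho -> - rho <= q ->
  exists l, 0 <= l <= 1 /\ `|l * p + (1 - l) * q| <= rho.
Proof.
move=> r0 pr qr.
case: (lerP (- rho) p) => hp.
  exists 1; split; first by rewrite ler01 lexx.
  by rewrite subrr mul0r addr0 mul1r ler_norml hp pr.
case: (lerP q rho) => hq.
  exists 0; split; first by rewrite lexx ler01.
  by rewrite subr0 mul0r add0r mul1r ler_norml hq qr.
have qp : 0 < q - p by lra.
exists (q / (q - p)); split.
  apply/andP; split; first by apply: divr_ge0; lra.
  by rewrite ler_pdivrMr // mul1r; lra.
have -> : q / (q - p) * p + (1 - q / (q - p)) * q = 0.
  by field; rewrite gt_eqF.
by rewrite normr0.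
Qed.

Lemma segment (r : 'I_N -> R) c z k (a : R) : 0 <= a <= r k ->
  Zr r c (z + a *: col k G) -> Zr r c (z - a *: col k G) ->
  Zr (fun i => if i == k then r i - a else r i) c z.
Proof.
move=> /andP[a0 ar] [m1 [H1 e1]] [m2 [H2 e2]].
have [l [/andP [l0 l1] Hl]] := @lam_exists (m1 k 0 - a) (m2 k 0 + a) (r k - a)
  ltac:(lra) ltac:(move: (H1 k); rewrite ler_norml; lra)
  ltac:(move: (H2 k); rewrite ler_norml; lra).
exists (l *: m1 + (1 - l) *: m2 - ((2 * l - 1) * a) *: delta_mx k 0); split.
  move=> i; rewrite !mxE.
  case: eqP => [->|/eqP ne].
    rewrite eqxx /=.
    have -> : l * m1 k 0 + (1 - l) * m2 k 0 - (2 * l - 1) * a * 1%:R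
       = l * (m1 k 0 - a) + (1 - l) * (m2 k 0 + a) by ring.
    exact: Hl.
  rewrite /= mulr0 subr0.
  move: (H1 i) (H2 i); rewrite !ler_norml => /andP[a1 b1] /andP[a2 b2].
  apply/andP; split; nra.
have E1 : G *m m1 = z + a *: col k G - c by rewrite e1 addrC addKr.
have E2 : G *m m2 = z - a *: col k G - c by rewrite e2 addrC addKr.
rewrite mulmxBr !mulmxDr -!scalemxAr E1 E2 -colE.
apply/matrixP=> i j; rewrite !mxE; ring.
Qed.

Lemma main_cancel (a r : 'I_N -> R) c : (forall i, 0 <= a i <= r i) ->
  forall n z, (forall phi : 'cV[R]_N, (forall i, `|phi i 0| <= a i) ->
      (forall i : 'I_N, (n <= i)%N -> phi i 0 = 0) -> Zr r c (z + G *m phi)) ->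
  Zr (fun i => if (i < n)%N then r i - a i else r i) c z.
Proof.
move=> Har; elim=> [|n IH] z Hz.
  have H0 : Zr r c (z + G *m 0).
    apply: Hz => i; rewrite mxE //.
    by rewrite normr0; case/andP: (Har i).
  by rewrite mulmx0 addr0 in H0.
case: (ltnP n N) => [ltnN | geNn].
  set k := Ordinal ltnN.
  have Hs : forall s : R, `|s| <= 1 ->
      Zr (fun i => if (i < n)%N then r i - a i else r i) c (z + (s * a k) *: col k G).
    move=> s hs; apply: IH => phi Hp Hz0.
    have := Hz (phi + (s * a k) *: delta_mx k 0).
    rewrite mulmxDr -scalemxAr -colE addrA => H; rewrite addrAC; apply: H.
    - move=> i; rewrite !mxE.
      case: eqP => [->|/eqP ne] /=.
        rewrite Hz0 ?leqnn // add0r mulr1 normrM (ger0_norm (proj1 (andP (Har k)))).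
        by rewrite -[X in _ <= X]mul1r ler_wpM2r //; case/andP: (Har k).
      by rewrite mulr0 addr0.
    - move=> i hi; rewrite !mxE Hz0 ?(ltnW hi) //.
      have ne : (i == k) = false.
        by apply/negbTE; apply/eqP => e; move: hi; rewrite e /= ltnn.
      by rewrite ne /= mulr0 addr0.
  have Hp := Hs 1 ltac:(by rewrite normr1).
  have Hm := Hs (-1) ltac:(by rewrite normrN normr1).
  rewrite mul1r in Hp; rewrite mulN1r scaleNr in Hm.
  have ak : 0 <= a k <= (if (k < n)%N then r k - a k else r k).
    by rewrite /= ltnn; case/andP: (Har k) => -> ->.
  have := @segment _ _ _ _ _ ak Hp Hm.
  apply: Zr_mono => i.
  case: eqP => [->|/eqP ne]; first by rewrite /= ltnn ltnSn.
  have : (nat_of_ord i != n) by apply: contra ne => /eqP e; apply/eqP/val_inj.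
  move=> nin; have -> : (i < n.+1)%N = (i < n)%N by apply/idP/idP; move/eqP: nin; lia.
  exact: lexx.
have := IH z (fun phi Hp Hz0 => Hz phi Hp (fun i hi => Hz0 i (ltnW hi))).
apply: Zr_mono => i.
have h1 : (i < n)%N by apply: leq_trans (ltn_ord i) geNn.
have h2 : (i < n.+1)%N by lia.
by rewrite h1 h2 lexx.
Qed.


Lemma mink_eq (al : 'cV[R]_N) c c0 : (forall i, 0 <= al i 0 <= 1) ->
  mink_diff (zonotope G c) (zonotope (scale_gens G al) c0) =
  zonotope (scale_gens G (const_mx 1 - al)) (c - c0).
Proof.
move=> Hal; rewrite eqEsubset; split.
  move=> z Hz.
  have H1 : Zr (fun i => if (i < N)%N then 1 - al i 0 else 1) c (z + c0).
    apply: (@main_cancel (fun i => al i 0) (fun _ => 1)) => // phi Hp _.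
    rewrite -addrA; apply: Hz; apply: Zr_zon; exists phi; split => //.
  apply: Zr_zon; case: H1 => mu [Hmu e]; exists mu; split.
    by move=> i; rewrite !mxE; move: (Hmu i); rewrite ltn_ord.
  by rewrite -[z](addrK c0) e addrAC.
move=> z Hz y Hy.
have Hz' : forall i, 0 <= (const_mx 1 - al) i 0 by move=> i; rewrite !mxE; case/andP: (Hal i) => _ h; lra.
case: (zon_Zr _ _ Hz' _ Hz) => mu [Hmu ->].
have Hal0 : forall i, 0 <= al i 0 by move=> i; case/andP: (Hal i).
case: (zon_Zr _ _ Hal0 _ Hy) => phi [Hphi ->].
exists (mu + phi); split.
  move=> i; rewrite mxE; apply: le_trans (ler_normD _ _) _.
  move: (Hmu i) (Hphi i); rewrite !mxE; lra.
by rewrite mulmxDr; apply/matrixP => i j; rewrite !mxE; ring.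
Qed.

End H.

Lemma addE (R : realType) m (X Y : 'cV[R]_m) k : (X + Y) k 0 = X k 0 + Y k 0.
Proof. by rewrite mxE. Qed.

Theorem proposition4 (R : realType) (nx nw N M L : nat)
  (G : 'M[R]_(nx, N)) (c : 'cV[R]_nx)
  (W : set 'cV[R]_nw) (w : 'I_M -> 'cV[R]_nw)
  (E : 'M[R]_(nx, nw)) (H : 'M[R]_(L, nx)) (h : 'cV[R]_L)
  (b d : 'I_N -> R)
  (theta_o : 'M[R]_(N, M)) (alpha_o : 'cV[R]_N) (c_o : 'cV[R]_nx)
  (alpha_u : 'cV[R]_N) (c_u : 'cV[R]_nx) :
  W = conv_hull w ->
  injective w ->
  (forall x, extreme_point W x <-> exists j, x = w j) ->
  lin_image E W = [set x | vle (H *m x) h] ->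
  (forall i, 0 < b i) ->
  (forall i, 0 <= d i) ->
  outer_minimizer G E w b theta_o alpha_o c_o ->
  inner_maximizer G H h d alpha_u c_u ->
  let Zs := zonotope G c in
  let Zover := zonotope (scale_gens G alpha_o) c_o in
  let Zunder := zonotope (scale_gens G alpha_u) c_u in
  [/\ mink_diff Zs Zover `<=` mink_diff Zs (lin_image E W),
      mink_diff Zs (lin_image E W) `<=` mink_diff Zs Zunder,
      mink_diff Zs Zover = zonotope (scale_gens G (const_mx 1 - alpha_o)) (c - c_o)
    & mink_diff Zs Zunder = zonotope (scale_gens G (const_mx 1 - alpha_u)) (c - c_u)].
Proof.
move=> HW winj Hext HEW Hb Hd [[Hfeas [Hth Hal1]] Hmin] [[Hvle Hau] Hmax] Zs Zover Zunder.
have Hao : forall i, 0 <= alpha_o i 0 <= 1.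
  move=> i; rewrite Hal1 andbT.
  move: theta_o w Hfeas Hth Hmin {HW winj Hext}; case: M => [|m] th ww Hf Ht Hm; last first.
    exact: le_trans (normr_ge0 _) (Ht i ord0).
  exfalso.
  have := Hm th (alpha_o - const_mx 1) c_o.
  have feas : outer_feasible G E ww th (alpha_o - const_mx 1) c_o.
    split; first by case.
    split; first by move=> ? [].
    by move=> k; rewrite !mxE; have := Hal1 k; lra.
  move/(_ feas); rewrite /outer_obj.
  under [X in _ <= X]eq_bigr => k _ do rewrite !mxE mulrBr mulr1.
  rewrite sumrB.
  have Sb : 0 < \sum_k b k.
    rewrite (bigD1 i) //=.
    have : 0 <= \sum_(k | k != i) b k by apply: sumr_ge0 => k _; exact: ltW.
    have := Hb i; lra.
  lra.
have sub1 : lin_image E W `<=` Zover.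
  move=> y [w' Hw' <-]; rewrite HW in Hw'; case: Hw' => lam [Hl0 [Hl1 ->]].
  apply: Zr_zon; exists (\col_i \sum_j lam j * theta_o i j); split.
    move=> i; rewrite mxE; apply: le_trans (ler_norm_sum _ _ _) _.
    apply: (@le_trans _ _ (\sum_j lam j * alpha_o i 0)).
      apply: ler_sum => j _; rewrite normrM ger0_norm //; exact: ler_wpM2l.
    by rewrite -mulr_suml Hl1 mul1r.
  rewrite mulmx_sumr.
  under eq_bigr => j _ do rewrite -scalemxAr -(Hfeas j).
  rewrite mulmx_sumcol.
  rewrite (eq_bigr (fun j => lam j *: c_o + lam j *: \sum_i theta_o i j *: col i G)); last first.
    by move=> j _; rewrite scalerDr.
  rewrite big_split /= -scaler_suml Hl1 scale1r; congr (_ + _).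
  under eq_bigr => j _ do rewrite scaler_sumr.
  rewrite exchange_big /=; apply: eq_bigr => i _.
  rewrite mxE scaler_suml; apply: eq_bigr => j _; by rewrite scalerA.
have sub2 : Zunder `<=` lin_image E W.
  move=> x Hx; rewrite HEW.
  have Hau0 : forall i, 0 <= alpha_u i 0 by move=> i; case/andP: (Hau i).
  case: (@zon_Zr _ _ _ G _ _ Hau0 _ Hx) => mu [Hmu ->].
  set A := H *m G.
  have key : forall k, (A *m mu) k 0 <= (mabs A *m alpha_u) k 0.
    move=> k; rewrite !mxE; apply: ler_sum => i _; rewrite !mxE.
    apply: le_trans (ler_norm _) _; rewrite normrM; exact: ler_wpM2l.
  move=> k; apply: le_trans _ (Hvle k).
  rewrite mulmxDr mulmxA -/A !addE; apply: lerD => //.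
split.
- by move=> z Hz y Hy; apply: Hz; apply: sub1.
- by move=> z Hz y Hy; apply: Hz; apply: sub2.
- exact: mink_eq.
- exact: mink_eq.
Qed.
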